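(* Let $a,b \ge 3$ be odd coprime integers. Let $G = \mathbb{D}_8^* \times_{\mathbb{Z}_2} \mathbb{D}_{4a}^* \times \mathbb{Z}_b$, where $\mathbb{D}_8^* \times_{\mathbb{Z}_2} \mathbb{D}_{4a}^*$ is the central product of $\mathbb{D}_8^*$ and $\mathbb{D}_{4a}^*$ obtained from their direct product by identifying their unique central involutions. Then $G$ does not admit a faithful orientation-preserving linear (orthogonal) action on $S^3$, i.e. $G$ is not isomorphic to a subgroup of $\mathrm{SO}(4)$.
   Context: $\mathbb{D}_{4m}^*$ denotes the binary dihedral (generalized quaternion) group of order $4m$, $\langle u,v \mid u^{2m}=1,\ v^2=u^m,\ vuv^{-1}=u^{-1}\rangle$; in particular $\mathbb{D}_8^*$ is the quaternion group of order 8. $\mathbb{Z}_b$ is the cyclic group of order $b$. *)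

(* Defs.v *)
From HB Require Import structures.
From mathcomp Require Import all_boot all_order all_algebra all_fingroup all_solvable all_field all_character.
From mathcomp Require Import reals.
Set Implicit Arguments. Unset Strict Implicit. Unset Printing Implicit Defensive.
Import GroupScope.

(* H is isomorphic to the binary dihedral group D*_{4m} of order 4m,
   <u, v | u^(2m) = 1, v^2 = u^m, v u v^-1 = u^-1>.
   (In MathComp, u ^ v = v^-1 * u * v; the relation v^-1 u v = u^-1 is
   equivalent to v u v^-1 = u^-1.) *)
Definition binary_dihedral_isog (gT : finGroupType) (H : {set gT}) (m : nat) :=
  H \isog Grp (u : v : (u ^+ (2 * m) = 1, v ^+ 2 = u ^+ m, u ^ v = u^-1)).

Definition in_SO (R : realType) (n : nat) (M : 'M[R]_n) : Prop :=
  (M *m M^T = 1%:M /\ \det M = 1)%R.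

(* Main.v *)
Require Import Defs.
From HB Require Import structures.
From mathcomp Require Import all_boot all_order all_algebra all_fingroup all_solvable all_field all_character.
From mathcomp Require Import reals.
From mathcomp Require Import ring.

Module Aux.
Set Implicit Arguments. Unset Strict Implicit. Unset Printing Implicit Defensive.
Import GRing.Theory Num.Theory.
Local Open Scope ring_scope.


Section Basis.
Variable R : realFieldType.
Implicit Types (u w : 'cV[R]_4) (M N : 'M[R]_4).

Definition dt u w : R := (u^T *m w) 0 0.

Lemma dt_sym u w : dt u w = dt w u.
Proof. by rewrite /dt -[w^T *m u]trmxK trmx_mul trmxK [in RHS]mxE. Qed.

Lemma dt_iso M u w : M^T *m M = 1%:M -> dt (M *m u) (M *m w) = dt u w.
Proof. by move=> H; rewrite /dt trmx_mul mulmxA -(mulmxA _ _ M) H mulmx1. Qed.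

Lemma dtNr u w : dt u (- w) = - dt u w.
Proof. by rewrite /dt mulmxN mxE. Qed.

Lemma dt_pos u : u != 0 -> dt u u != 0.
Proof.
move=> nz; apply: contra nz => /eqP H; apply/eqP/matrixP => i j.
rewrite (ord1 j) mxE.
have E : dt u u = \sum_i u i 0 ^+ 2.
  by rewrite /dt mxE; apply: eq_bigr => k _; rewrite mxE expr2.
rewrite E in H.
have := psumr_eq0P (fun k _ => sqr_ge0 (u k 0)) H isT (i:=i).
by move/eqP; rewrite sqrf_eq0 => /eqP.
Qed.

Variables I J : 'M[R]_4.
Let C := I *m I.
Hypotheses (ItI : I^T *m I = 1%:M) (JtJ : J^T *m J = 1%:M)
  (JJ : J *m J = C) (IJr : I *m J = J *m I *m C).

Lemma CI u : C *m (I *m u) = I *m (C *m u).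
Proof. by rewrite /C !mulmxA. Qed.
Lemma CJ u : C *m (J *m u) = J *m (C *m u).
Proof. by rewrite -JJ !mulmxA. Qed.

Definition Pbn (n : nat) : 'M[R]_4 :=
  match n with 0 => 1%:M | 1 => I | 2 => J | _ => I *m J end.
Definition Pb (j : 'I_4) := Pbn j.

Variable v : 'cV[R]_4.
Hypotheses (Cv : C *m v = - v) (vnz : v != 0).

Let s := dt v v.

Lemma dI0 u : C *m u = - u -> dt u (I *m u) = 0.
Proof.
move=> Cu; have : dt u (I *m u) = - dt u (I *m u).
  by rewrite -{1}(dt_iso u (I *m u) ItI) mulmxA -/C Cu dtNr dt_sym.
move=> /eqP; rewrite -subr_eq0 opprK -mulr2n mulrn_eq0 /= => /eqP //.
Qed.

Lemma dJ0 u : C *m u = - u -> dt u (J *m u) = 0.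
Proof.
move=> Cu; have : dt u (J *m u) = - dt u (J *m u).
  by rewrite -{1}(dt_iso u (J *m u) JtJ) mulmxA JJ Cu dtNr dt_sym.
move=> /eqP; rewrite -subr_eq0 opprK -mulr2n mulrn_eq0 /= => /eqP //.
Qed.

Lemma JIv : J *m (I *m v) = - (I *m (J *m v)).
Proof. by rewrite [in RHS]mulmxA IJr -mulmxA -/C Cv !mulmxN -mulmxA opprK. Qed.

Lemma L12 : dt (I *m v) (J *m v) = dt v (I *m (J *m v)).
Proof.
by rewrite -(dt_iso _ _ JtJ) [J *m (J *m v)]mulmxA JJ Cv dtNr JIv dt_sym dtNr opprK.
Qed.

Lemma L03 : dt v (I *m (J *m v)) = 0.
Proof.
have : dt v (I *m (J *m v)) = - dt v (I *m (J *m v)).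
  rewrite -{1}(dt_iso _ _ ItI) [I *m (I *m _)]mulmxA -/C CJ Cv mulmxN dtNr L12 //.
move=> /eqP; rewrite -subr_eq0 opprK -mulr2n mulrn_eq0 /= => /eqP //.
Qed.

Definition Bm : 'M[R]_4 := \matrix_(i, j) (Pb j *m v) i 0.

Lemma gram (i j : 'I_4) : dt (Pb i *m v) (Pb j *m v) = s *+ (i == j).
Proof.
have L01 := dI0 Cv; have L02 := dJ0 Cv.
have dIs := dt_iso v v ItI; have dJs := dt_iso v v JtJ.
case: i => [[|[|[|[|//]]]] ?]; case: j => [[|[|[|[|//]]]] ?];
  rewrite /Pb /= ?mul1mx -?mulmxA ?mulr0n ?mulr1n //.
all: try by [rewrite dt_sym].
all: try by [rewrite dt_sym L03].
all: try by [rewrite L12 L03].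
all: try by [rewrite dt_sym L12 L03].
all: try by [rewrite (dt_iso _ _ ItI)].
all: try by [rewrite JIv dtNr (dt_iso _ _ JtJ) dt_sym L01 oppr0].
all: try by [rewrite dt_sym JIv dtNr (dt_iso _ _ JtJ) dt_sym L01 oppr0].
all: try by [rewrite !(dt_iso _ _ ItI) dJs].
all: try exact: L03.
all: try by [rewrite (dt_iso _ _ ItI) dt_sym].
all: try rewrite [dt (I *m _) (J *m v)]dt_sym.
all: by rewrite -[I *m (J *m v)]opprK -JIv dtNr (dt_iso _ _ JtJ) L01 oppr0.
Qed.

Lemma s_nz : s != 0. Proof. exact: dt_pos. Qed.

Lemma BtB : Bm^T *m Bm = s%:M.
Proof.
apply/matrixP=> i j; rewrite !mxE -gram /dt mxE.
by apply: eq_bigr => k _; rewrite !mxE.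
Qed.

Definition Bi := s^-1 *: Bm^T.

Lemma BiB : Bi *m Bm = 1%:M.
Proof. by rewrite /Bi -scalemxAl BtB -mul_scalar_mx -scalar_mxM mulVf ?s_nz. Qed.

Lemma BBi : Bm *m Bi = 1%:M.
Proof. exact: mulmx1C BiB. Qed.

Lemma MB M : M *m Bm = \matrix_(i, j) (M *m (Pb j *m v)) i 0.
Proof.
by apply/matrixP=> i j; rewrite !mxE; apply: eq_bigr => k _; rewrite !mxE.
Qed.

Lemma cPb M (j : 'I_4) : M *m I = I *m M -> M *m J = J *m M ->
  M *m Pb j = Pb j *m M.
Proof.
move=> HI HJ; case: j => [[|[|[|[|//]]]] ?]; rewrite /Pb /=.
- by rewrite mulmx1 mul1mx.
- by [].
- by [].
by rewrite mulmxA HI -mulmxA HJ mulmxA.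
Qed.

Lemma inj M M' : M *m I = I *m M -> M *m J = J *m M ->
  M' *m I = I *m M' -> M' *m J = J *m M' -> M *m v = M' *m v -> M = M'.
Proof.
move=> HI HJ HI' HJ' E.
have : M *m Bm = M' *m Bm.
  rewrite !MB; apply: eq_mx => i j; rewrite !mulmxA.
  by rewrite !cPb // -!mulmxA E.
move=> /(congr1 (mulmx^~ Bi)); rewrite -!mulmxA BBi !mulmx1 //.
Qed.

Lemma coordE u j : (Bi *m u) j 0 = s^-1 * dt (Pb j *m v) u.
Proof.
rewrite /Bi -scalemxAl [LHS]mxE; congr (_ * _); rewrite /dt !mxE.
by apply: eq_bigr => k _; rewrite !mxE.
Qed.
End Basis.

Lemma C_neg1 (R : realFieldType) (I J : 'M[R]_4) :
  I^T *m I = 1%:M -> J^T *m J = 1%:M -> J *m J = I *m I ->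
  I *m J = J *m I *m (I *m I) -> (I *m I) *m (I *m I) = 1%:M ->
  I *m I != 1%:M -> I *m I = - 1%:M.
Proof.
move=> ItI JtJ JJ IJr CC nC1.
set C := I *m I in JJ IJr CC nC1 *.
case/boolP: [exists j : 'I_4, C *m (delta_mx j 0 : 'cV[R]_4) != delta_mx j 0];
  last first.
  move=> /existsPn H; case/negP: nC1; apply/eqP/matrixP => i j.
  have /negPn/eqP E := H j.
  have := congr1 (fun M : 'cV[R]_4 => M i 0) E; rewrite -colE !mxE => ->.
  by rewrite eqxx andbT.
case/existsP => j Cw; set w := delta_mx j 0 in Cw.
pose v := w - C *m w.
have Cv : C *m v = - v by rewrite /v mulmxBr mulmxA CC mul1mx opprB.
have vnz : v != 0 by rewrite /v subr_eq0 eq_sym.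
apply: (inj ItI JtJ JJ IJr Cv vnz).
- by rewrite /C !mulmxA.
- by rewrite -JJ !mulmxA.
- by rewrite mulNmx mulmxN mul1mx mulmx1.
- by rewrite mulNmx mulmxN mul1mx mulmx1.
by rewrite Cv mulNmx mul1mx.
Qed.

Definition o0 : 'I_4 := @Ordinal 4 0 isT.
Definition o1 : 'I_4 := @Ordinal 4 1 isT.
Definition o2 : 'I_4 := @Ordinal 4 2 isT.
Definition o3 : 'I_4 := @Ordinal 4 3 isT.

Lemma sum4 (V : zmodType) (F : 'I_4 -> V) :
  \sum_(i < 4) F i = F o0 + F o1 + F o2 + F o3.
Proof.
rewrite !big_ord_recr big_ord0 /= add0r.
by congr (_ + _ + _ + _); congr F; apply: val_inj.
Qed.

Lemma cross3 (R : comRingType) (n1 n2 n3 x1 x2 x3 y1 y2 y3 : R) :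
  GRing.lreg n1 ->
  n2 * x3 = n3 * x2 -> n3 * x1 = n1 * x3 -> n1 * x2 = n2 * x1 ->
  n2 * y3 = n3 * y2 -> n3 * y1 = n1 * y3 -> n1 * y2 = n2 * y1 ->
  [/\ x2 * y3 = x3 * y2, x3 * y1 = x1 * y3 & x1 * y2 = x2 * y1].
Proof.
move=> rn hx1 hx2 hx3 hy1 hy2 hy3.
have rn2 : GRing.lreg (n1 * n1) by apply: lregM.
split; apply/eqP; rewrite -subr_eq0.
- rewrite -(mulrI_eq0 _ rn2).
  have -> : n1 * n1 * (x2 * y3 - x3 * y2) = (n1 * x2) * (n1 * y3) - (n1 * x3) * (n1 * y2) by ring.
  by rewrite hx3 -hy2 -hx2 hy3; apply/eqP; ring.
- rewrite -(mulrI_eq0 _ rn).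
  have -> : n1 * (x3 * y1 - x1 * y3) = (n1 * x3) * y1 - (n1 * y3) * x1 by ring.
  by rewrite -hx2 -hy2; apply/eqP; ring.
- rewrite -(mulrI_eq0 _ rn).
  have -> : n1 * (x1 * y2 - x2 * y1) = x1 * (n1 * y2) - (n1 * x2) * y1 by ring.
  by rewrite hx3 hy3; apply/eqP; ring.
Qed.

Definition tix (j k : nat) : nat :=
  match j, k with
  | 0, k => k | j, 0 => j
  | 1, 1 => 0 | 1, 2 => 3 | 1, _ => 2
  | 2, 1 => 3 | 2, 2 => 0 | 2, _ => 1
  | _, 1 => 2 | _, 2 => 1 | _, _ => 0 end.

Section Quat.
Variable R : realFieldType.
Variables I J : 'M[R]_4.
Hypotheses (ItI : I^T *m I = 1%:M) (JtJ : J^T *m J = 1%:M)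
  (II : I *m I = - 1%:M) (JJ : J *m J = - 1%:M) (IJa : I *m J = - (J *m I)).

Definition tsg (j k : nat) : R :=
  match j, k with
  | 0, _ => 1 | _, 0 => 1
  | 1, 1 => -1 | 1, 2 => 1 | 1, _ => -1
  | 2, 1 => -1 | 2, 2 => -1 | 2, _ => 1
  | _, 1 => 1 | _, 2 => -1 | _, _ => -1 end.

Definition Q (a : 'cV[R]_4) : 'M[R]_4 := \sum_(j < 4) a j 0 *: Pb I J j.

Definition tbl (j k : 'I_4) : 'cV[R]_4 :=
  \col_i (if val i == tix j k then tsg j k else 0).

Lemma QE a : Q a = a o0 0 *: 1%:M + a o1 0 *: I + a o2 0 *: J + a o3 0 *: (I *m J).
Proof. by rewrite /Q sum4. Qed.

Lemma Qdelta n c : (n < 4)%N -> Q (\col_i (if val i == n then c else 0)) = c *: Pbn I J n.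
Proof.
case: n => [|[|[|[|//]]]] _; rewrite QE !mxE /= !scale0r ?add0r ?addr0 //.
Qed.

Lemma JI : J *m I = - (I *m J). Proof. by rewrite IJa opprK. Qed.

Lemma Ptab (j k : 'I_4) : Pb I J j *m Pb I J k = tsg j k *: Pbn I J (tix j k).
Proof.
case: j => [[|[|[|[|//]]]] ?]; case: k => [[|[|[|[|//]]]] ?];
  rewrite /Pb /= ?scale1r ?scaleN1r ?mul1mx ?mulmx1 //.
- by rewrite mulmxA II mulNmx mul1mx.
- exact: JI.
- by rewrite mulmxA JI mulNmx -mulmxA JJ mulmxN mulmx1 opprK.
- by rewrite -mulmxA JI mulmxN mulmxA II mulNmx mul1mx opprK.
- by rewrite -mulmxA JJ mulmxN mulmx1.
by rewrite mulmxA -(mulmxA I J I) JI mulmxN mulmxA II !mulNmx mul1mx opprK JJ.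
Qed.

Lemma Qtbl j k : Q (tbl j k) = Pb I J j *m Pb I J k.
Proof.
rewrite Ptab /tbl Qdelta //.
by case: j => [[|[|[|[|//]]]] ?]; case: k => [[|[|[|[|//]]]] ?].
Qed.

Lemma Q_sum (F : 'I_4 -> 'cV[R]_4) : Q (\sum_i F i) = \sum_i Q (F i).
Proof.
rewrite /Q. under eq_bigr => j _ do rewrite (summxE (index_enum _) (fun _ => true) F) scaler_suml.
exact: exchange_big.
Qed.

Lemma Q_scale c a : Q (c *: a) = c *: Q a.
Proof.
rewrite /Q scaler_sumr; apply: eq_bigr => j _; by rewrite mxE scalerA.
Qed.

Definition qm (a b : 'cV[R]_4) : 'cV[R]_4 :=
  \sum_(j < 4) \sum_(k < 4) (a j 0 * b k 0) *: tbl j k.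

Lemma Q_mul a b : Q a *m Q b = Q (qm a b).
Proof.
rewrite /qm Q_sum {1}/Q mulmx_suml; apply: eq_bigr => j _.
rewrite Q_sum {1}/Q mulmx_sumr; apply: eq_bigr => k _.
by rewrite Q_scale Qtbl -scalemxAl -scalemxAr scalerA.
Qed.

Lemma qmE a b :
  [/\ qm a b o0 0 = a o0 0 * b o0 0 - a o1 0 * b o1 0 - a o2 0 * b o2 0 - a o3 0 * b o3 0,
      qm a b o1 0 = a o0 0 * b o1 0 + a o1 0 * b o0 0 + a o2 0 * b o3 0 - a o3 0 * b o2 0,
      qm a b o2 0 = a o0 0 * b o2 0 - a o1 0 * b o3 0 + a o2 0 * b o0 0 + a o3 0 * b o1 0
    & qm a b o3 0 = a o0 0 * b o3 0 + a o1 0 * b o2 0 - a o2 0 * b o1 0 + a o3 0 * b o0 0].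
Proof.
rewrite /qm !sum4 !mxE /=.
split; ring.
Qed.

Lemma qm_commP (a b : 'cV[R]_4) : qm a b = qm b a ->
  [/\ a o2 0 * b o3 0 = a o3 0 * b o2 0, a o3 0 * b o1 0 = a o1 0 * b o3 0
    & a o1 0 * b o2 0 = a o2 0 * b o1 0].
Proof.
move=> E; have [_ h1 h2 h3] := qmE a b; have [_ g1 g2 g3] := qmE b a.
have e1 := congr1 (fun c : 'cV[R]_4 => c o1 0) E.
have e2 := congr1 (fun c : 'cV[R]_4 => c o2 0) E.
have e3 := congr1 (fun c : 'cV[R]_4 => c o3 0) E.
rewrite /= h1 g1 in e1; rewrite /= h2 g2 in e2; rewrite /= h3 g3 in e3.
split; apply/eqP; rewrite -subr_eq0.
- have Ex : (a o2 0 * b o3 0 - a o3 0 * b o2 0) *+ 2 =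
    (a o0 0 * b o1 0 + a o1 0 * b o0 0 + a o2 0 * b o3 0 - a o3 0 * b o2 0) -
    (b o0 0 * a o1 0 + b o1 0 * a o0 0 + b o2 0 * a o3 0 - b o3 0 * a o2 0) by ring.
  by move: Ex; rewrite e1 subrr => /eqP; rewrite mulrn_eq0.
- have Ex : (a o3 0 * b o1 0 - a o1 0 * b o3 0) *+ 2 =
    (a o0 0 * b o2 0 - a o1 0 * b o3 0 + a o2 0 * b o0 0 + a o3 0 * b o1 0) -
    (b o0 0 * a o2 0 - b o1 0 * a o3 0 + b o2 0 * a o0 0 + b o3 0 * a o1 0) by ring.
  by move: Ex; rewrite e2 subrr => /eqP; rewrite mulrn_eq0.
- have Ex : (a o1 0 * b o2 0 - a o2 0 * b o1 0) *+ 2 =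
    (a o0 0 * b o3 0 + a o1 0 * b o2 0 - a o2 0 * b o1 0 + a o3 0 * b o0 0) -
    (b o0 0 * a o3 0 + b o1 0 * a o2 0 - b o2 0 * a o1 0 + b o3 0 * a o0 0) by ring.
  by move: Ex; rewrite e3 subrr => /eqP; rewrite mulrn_eq0.
Qed.

Lemma qm_commE (a b : 'cV[R]_4) :
  a o2 0 * b o3 0 = a o3 0 * b o2 0 -> a o3 0 * b o1 0 = a o1 0 * b o3 0 ->
  a o1 0 * b o2 0 = a o2 0 * b o1 0 -> qm a b = qm b a.
Proof.
move=> c1 c2 c3; have [h0 h1 h2 h3] := qmE a b; have [g0 g1 g2 g3] := qmE b a.
apply/matrixP => i j; rewrite (ord1 j).
case: i => [[|[|[|[|//]]]] Hi].
- have -> : Ordinal Hi = o0 by apply: val_inj.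
  by rewrite h0 g0; ring.
- have -> : Ordinal Hi = o1 by apply: val_inj.
  rewrite h1 g1; apply/eqP; rewrite -subr_eq0.
  have -> : a o0 0 * b o1 0 + a o1 0 * b o0 0 + a o2 0 * b o3 0 - a o3 0 * b o2 0 -
    (b o0 0 * a o1 0 + b o1 0 * a o0 0 + b o2 0 * a o3 0 - b o3 0 * a o2 0) =
    (a o2 0 * b o3 0 - a o3 0 * b o2 0) *+ 2 by ring.
  by rewrite c1 subrr mul0rn.
- have -> : Ordinal Hi = o2 by apply: val_inj.
  rewrite h2 g2; apply/eqP; rewrite -subr_eq0.
  have -> : a o0 0 * b o2 0 - a o1 0 * b o3 0 + a o2 0 * b o0 0 + a o3 0 * b o1 0 -
    (b o0 0 * a o2 0 - b o1 0 * a o3 0 + b o2 0 * a o0 0 + b o3 0 * a o1 0) =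
    (a o3 0 * b o1 0 - a o1 0 * b o3 0) *+ 2 by ring.
  by rewrite c2 subrr mul0rn.
- have -> : Ordinal Hi = o3 by apply: val_inj.
  rewrite h3 g3; apply/eqP; rewrite -subr_eq0.
  have -> : a o0 0 * b o3 0 + a o1 0 * b o2 0 - a o2 0 * b o1 0 + a o3 0 * b o0 0 -
    (b o0 0 * a o3 0 + b o1 0 * a o2 0 - b o2 0 * a o1 0 + b o3 0 * a o0 0) =
    (a o1 0 * b o2 0 - a o2 0 * b o1 0) *+ 2 by ring.
  by rewrite c3 subrr mul0rn.
Qed.

Lemma qm_three (n a b : 'cV[R]_4) : n o0 0 = 0 -> n != 0 ->
  qm n a = qm a n -> qm n b = qm b n -> qm a b = qm b a.
Proof.
move=> n0 nnz /qm_commP [x1 x2 x3] /qm_commP [y1 y2 y3].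
have : (n o1 0 != 0) || (n o2 0 != 0) || (n o3 0 != 0).
  apply: contraR nnz; rewrite !negb_or !negbK => /andP[/andP[/eqP e1 /eqP e2] /eqP e3].
  apply/eqP/matrixP => i j; rewrite (ord1 j) mxE.
  case: i => [[|[|[|[|//]]]] Hi].
  - by have -> : Ordinal Hi = o0 by apply: val_inj.
  - by have -> : Ordinal Hi = o1 by apply: val_inj.
  - by have -> : Ordinal Hi = o2 by apply: val_inj.
  - by have -> : Ordinal Hi = o3 by apply: val_inj.
case/orP => [/orP [] | ] nz.
- have [z1 z2 z3] := cross3 (mulfI nz) x1 x2 x3 y1 y2 y3.
  exact: qm_commE.
- have [z2 z3 z1] := cross3 (mulfI nz) x2 x3 x1 y2 y3 y1.
  exact: qm_commE.
- have [z3 z1 z2] := cross3 (mulfI nz) x3 x1 x2 y3 y1 y2.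
  exact: qm_commE.
Qed.

Lemma BQ (v a : 'cV[R]_4) : Bm I J v *m a = Q a *m v.
Proof.
apply/matrixP => i j; rewrite (ord1 j) /Q mulmx_suml summxE !mxE.
apply: eq_bigr => k _; by rewrite -scalemxAl !mxE mulrC.
Qed.

Lemma cQ M a : M *m I = I *m M -> M *m J = J *m M -> M *m Q a = Q a *m M.
Proof.
move=> HI HJ; rewrite /Q mulmx_sumr mulmx_suml; apply: eq_bigr => j _.
by rewrite -scalemxAr -scalemxAl cPb.
Qed.

Lemma comm_main X Y N :
  X *m I = I *m X -> X *m J = J *m X -> Y *m I = I *m Y -> Y *m J = J *m Y ->
  N *m I = I *m N -> N *m J = J *m N -> N^T = - N -> N != 0 ->
  X *m N = N *m X -> Y *m N = N *m Y -> X *m Y = Y *m X.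
Proof.
move=> XI XJ YI YJ NI NJ Nt Nnz XN YN.
pose v : 'cV[R]_4 := delta_mx 0 0.
have vnz : v != 0.
  apply/eqP => /matrixP/(_ 0 0); rewrite !mxE /= => /eqP; by rewrite oner_eq0.
have JJ' : J *m J = I *m I by rewrite JJ II.
have IJr : I *m J = J *m I *m (I *m I) by rewrite II mulmxN mulmx1 IJa.
have Cv : (I *m I) *m v = - v by rewrite II mulNmx mul1mx.
have BBi1 := BBi ItI JtJ JJ' IJr Cv vnz.
have BiB1 := BiB ItI JtJ JJ' IJr Cv vnz.
have injM := inj ItI JtJ JJ' IJr Cv vnz.
set B := Bm I J v in BBi1 BiB1; set Bi' := Bi I J v in BBi1 BiB1.
have rep M : M *m v = Q (Bi' *m (M *m v)) *m v.
  by rewrite -BQ -/B mulmxA BBi1 mul1mx.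
have key M M' : M *m I = I *m M -> M *m J = J *m M ->
    (M *m M') *m v = Q (qm (Bi' *m (M' *m v)) (Bi' *m (M *m v))) *m v.
  move=> MI MJ; rewrite -Q_mul -mulmxA {1}(rep M') mulmxA (cQ _ MI MJ) -mulmxA {1}(rep M) mulmxA.
  by [].

have cinj a b : Q a *m v = Q b *m v -> a = b.
  rewrite -!BQ -/B => /(congr1 (mulmx Bi')); by rewrite !mulmxA BiB1 !mul1mx.
set xi := Bi' *m (X *m v); set eta := Bi' *m (Y *m v); set nu := Bi' *m (N *m v).
have hX : qm nu xi = qm xi nu.
  apply: cinj; rewrite -key // -key // XN //.
have hY : qm nu eta = qm eta nu.
  apply: cinj; rewrite -key // -key // YN //.
have nu0 : nu o0 0 = 0.
  rewrite /nu coordE /Pb /= mul1mx; apply/eqP; rewrite mulf_eq0; apply/orP; right.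
  have : dt v (N *m v) = - dt v (N *m v).
    by rewrite {1}dt_sym /dt trmx_mul Nt mulmxN mulNmx mulmxA [LHS]mxE.
  move=> /eqP; rewrite -subr_eq0 opprK -mulr2n mulrn_eq0 /= => /eqP ->.
  by [].
have nunz : nu != 0.
  apply: contra Nnz => /eqP nu0'; apply/eqP; apply: injM => //.
  - by rewrite mul0mx mulmx0.
  - by rewrite mul0mx mulmx0.
  rewrite (rep N) -/nu nu0' mul0mx; rewrite /Q big1 ?mul0mx // => j _; by rewrite mxE scale0r.
have hXY := qm_three nu0 nunz hX hY.
apply: injM.
- by rewrite -mulmxA YI !mulmxA XI.
- by rewrite -mulmxA YJ !mulmxA XJ.
- by rewrite -mulmxA XI !mulmxA YI.
- by rewrite -mulmxA XJ !mulmxA YJ.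
by rewrite key // key // hXY.
Qed.
End Quat.

Lemma core (R : realFieldType) (I J X Y W : 'M[R]_4) (b : nat) :
  I *m I^T = 1%:M -> J *m J^T = 1%:M -> W *m W^T = 1%:M ->
  J *m J = I *m I -> (I *m I) *m (I *m I) = 1%:M -> I *m I != 1%:M ->
  I *m J = J *m I *m (I *m I) ->
  X *m I = I *m X -> X *m J = J *m X -> Y *m I = I *m Y -> Y *m J = J *m Y ->
  W *m I = I *m W -> W *m J = J *m W -> W *m X = X *m W -> W *m Y = Y *m W ->
  odd b -> W ^+ b = 1 -> W != 1 -> X *m Y = Y *m X.
Proof.
move=> IIt JJt WWt JJ CC C1 IJr XI XJ YI YJ WI WJ WX WY ob Wb W1.
have ItI := mulmx1C IIt; have JtJ := mulmx1C JJt; have WtW := mulmx1C WWt.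
have II := C_neg1 ItI JtJ JJ IJr CC C1.
have JJ' : J *m J = - 1%:M by rewrite JJ II.
have IJa : I *m J = - (J *m I) by rewrite IJr II mulmxN mulmx1.
have Wt M : W *m M = M *m W -> W^T *m M = M *m W^T.
  move=> WM; rewrite -[LHS]mulmx1 -WWt !mulmxA -(mulmxA _ M) -WM.
  by rewrite !mulmxA WtW mul1mx.
pose N := W - W^T.
have Nc M : W *m M = M *m W -> N *m M = M *m N.
  by move=> WM; rewrite /N mulmxBl mulmxBr WM Wt.
have Nt : N^T = - N by rewrite /N linearB /= trmxK opprB.
have Nnz : N != 0.
  apply: contra W1; rewrite /N subr_eq0 => /eqP WWT.
  have W2 : W ^+ 2 = 1 by rewrite expr2 -mulmxE {2}WWT WWt idmxE.
  rewrite -Wb -(odd_double_half b) ob -muln2 exprD expr1 mulnC exprM W2 expr1n mulr1.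
  by [].
apply: (comm_main ItI JtJ II JJ' IJa XI XJ YI YJ _ _ Nt Nnz).
- exact: Nc.
- exact: Nc.
- by rewrite Nc.
- by rewrite Nc.
Qed.

End Aux.
Import Aux.
Import GroupScope.


Lemma Q8_gens (gT : finGroupType) (Q : {group gT}) : binary_dihedral_isog Q 2 ->
  exists i j, [/\ i \in Q, j \in Q, #[i] = 4%N, j ^+ 2 = i ^+ 2 & i ^ j = i^-1].
Proof.
move=> isoQ.
have isoQ8 : Q \isog 'Q_(2 ^ 3).
  rewrite isogEhom; apply/andP; split.
  - rewrite (Grp_quaternion (n := 3)) //; exact: (isoGrp_hom isoQ).
  - rewrite isoQ; exact: (isoGrp_hom (Grp_quaternion (n := 3) isT)).
have [[x y] [oQ Qx ox /setDP [Qy _]] [oy y2 xy]] := generators_quaternion (n := 3) isT isoQ8.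
by exists x, y; split.
Qed.

Lemma D_nonab (gT : finGroupType) (D : {group gT}) a : odd a -> (3 <= a)%N ->
  binary_dihedral_isog D a -> ~~ abelian D.
Proof.
move=> oa a3 isoD.
have a1 : (1 < a)%N by apply: leq_trans a3.
have [[x y] /= /eqP [defH xq y2 xy]] := existsP (isoGrp_hom (Grp_dihedral a1)).
have homD : 'D_(a.*2) \homg D.
  rewrite isoD; apply/existsP; exists (x, y); rewrite /= !xpair_eqE /=.
  have x2a : x ^+ (2 * a)%N = 1 by rewrite mulnC expgM xq expg1n.
  apply/and4P; split; apply/eqP => //.
  by rewrite y2 xq.
have nabD : ~~ abelian 'D_(a.*2).
  apply/negP => abD.
  have Dx : x \in 'D_(a.*2) by rewrite -defH mem_gen // inE cycle_id.
  have Dy : y \in 'D_(a.*2) by rewrite -defH mem_gen // inE cycle_id orbT.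
  have cxy : commute x y := (centsP abD) x Dx y Dy.
  have xi : x^-1 = x by rewrite -xy; apply/conjg_fixP/commgP.
  have x2 : x ^+ 2 = 1 by rewrite expgS expg1 -{2}xi mulgV.
  have x1 : x = 1.
    have ea : (1 + a./2.*2 = a)%N by rewrite -[in RHS](odd_double_half a) oa.
    have : x ^+ (1 + a./2.*2) = 1 by rewrite ea.
    have e2 : (a./2.*2 = 2 * a./2)%N by rewrite mul2n.
    by rewrite expgD e2 expgM x2 expg1n mulg1 expg1.
  rewrite x1 cycle1 joing1G in defH.
  have := card_dihedral a1; rewrite -defH -orderE => oy.
  have : (#[y] <= 2)%N by apply: dvdn_leq => //; rewrite order_dvdn y2.
  rewrite oy -addnn => h.
  by have := leq_trans (leq_add a3 a3) h.
apply/negP => abD; case/homgP: homD => f fD.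
by have := morphim_abelian f abD; rewrite fD; apply/negP.
Qed.

Theorem mainTheorem6 (a b : nat) (gT : finGroupType) (G Q D Z : {group gT}) :
  odd a -> odd b -> 3 <= a -> 3 <= b -> coprime a b ->
  binary_dihedral_isog Q 2 ->
  binary_dihedral_isog D a ->
  #|Q :&: D| = 2 ->
  cyclic Z -> #|Z| = b ->
  (Q \* D) \x Z = G ->
  forall R : realType,
    ~ exists rG : mx_representation R G 4,
        mx_faithful rG /\ (forall x, x \in G -> in_SO (rG x)).
Proof.
move=> oa ob a3 b3 _ isoQ isoD _ cycZ oZ defG R [rG [ffl SO]].
case/dprodP: (defG) => -[K Z' eK eZ'] KZ cZK _.
case/cprodP: (eK) => _ QDK cDQ.
rewrite eK in cZK KZ.
have sQK : Q \subset K by rewrite -QDK mulG_subl.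
have sDK : D \subset K by rewrite -QDK mulG_subr.
have sKG : K \subset G by rewrite -KZ mulG_subl.
have sZG : Z \subset G by rewrite -KZ mulG_subr.
have [i [j [Qi Qj oi j2 ij]]] := @Q8_gens _ _ isoQ.
have [d1 Dd1 nC] := subsetPn (@D_nonab _ _ _ oa a3 isoD).
have [d2 Dd2 nc] : exists2 d2, d2 \in D & d1 * d2 != d2 * d1.
  case: (boolP [exists d2 in D, d1 * d2 != d2 * d1]) => [/existsP[d2 /andP[Dd2 nc]] | /existsPn H].
    by exists d2.
  case/negP: nC; apply/centP => d2 Dd2; have := H d2; rewrite Dd2 /= negbK => /eqP.
  by [].
case/cyclicP: cycZ => z eZ.
have Zz : z \in Z by rewrite eZ cycle_id.
have oz : #[z] = b by rewrite orderE -eZ oZ.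
have inK x : x \in Q -> x \in K by move/(subsetP sQK).
have inKD x : x \in D -> x \in K by move/(subsetP sDK).
have inG x : x \in K -> x \in G by move/(subsetP sKG).
have Gi := inG _ (inK _ Qi); have Gj := inG _ (inK _ Qj).
have Gd1 := inG _ (inKD _ Dd1); have Gd2 := inG _ (inKD _ Dd2).
have Gz : z \in G by apply: (subsetP sZG).
have cm x y : x \in G -> y \in G -> commute x y -> (rG x *m rG y = rG y *m rG x)%R.
  by move=> Gx Gy cxy; rewrite -!repr_mxM // cxy.
have cDQ' d q : d \in D -> q \in Q -> commute d q.
  by move=> Dd Qq; apply: (centsP cDQ) d Dd q Qq.
have cZK' k : k \in K -> commute z k.
  by move=> Kk; apply: (centsP cZK) z Zz k Kk.
have jj : j * j = i * i by have := j2; rewrite (expgS j 1) (expgS i 1) !expg1.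
have Gii : i * i \in G by rewrite groupM.
have i4 : i * i * (i * i) = 1.
  by have := expg_order i; rewrite oi !expgS expg0 mulg1 !mulgA.
have ijr : i * j = j * i * (i * i).
  by rewrite conjgC ij invg_expg oi /= !expgS expg0 mulg1 !mulgA.
have i2ne : i * i != 1.
  apply/eqP => h; have := order_dvdn i 2; rewrite oi (expgS i 1) expg1 h eqxx.
  by [].
suff E : (rG d1 *m rG d2 = rG d2 *m rG d1)%R.
  rewrite -!repr_mxM // in E.
  have := mx_faithful_inj ffl (groupM Gd1 Gd2) (groupM Gd2 Gd1) E.
  by move/eqP; rewrite (negbTE nc).
apply: (core (b := b) (SO i Gi).1 (SO j Gj).1 (SO z Gz).1) => //.
- by rewrite -!repr_mxM // jj.
- by rewrite -!repr_mxM ?groupM // i4 repr_mx1.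
- apply: contra i2ne => /eqP h; apply/eqP; apply: (mx_faithful_inj ffl) => //.
  by rewrite repr_mxM // h repr_mx1.
- by rewrite -!repr_mxM ?groupM // ijr.
- by apply: cm => //; apply: cDQ'.
- by apply: cm => //; apply: cDQ'.
- by apply: cm => //; apply: cDQ'.
- by apply: cm => //; apply: cDQ'.
- by apply: cm => //; apply: cZK'; apply: inK.
- by apply: cm => //; apply: cZK'; apply: inK.
- by apply: cm => //; apply: cZK'; apply: inKD.
- by apply: cm => //; apply: cZK'; apply: inKD.
- by rewrite -repr_mxX // -oz expg_order repr_mx1 idmxE.
apply/eqP => h.
have z1 : z = 1 by apply: (mx_faithful_inj ffl) => //; rewrite h repr_mx1 idmxE.
by move: oz; rewrite z1 order1 => b1; rewrite -b1 in b3.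
Qed.
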